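(* Let $X,Y,Z$ be countable discrete metric spaces of bounded geometry, $d_{XY},d'_{XY}\in D(X,Y)$, $d_{YZ},d'_{YZ}\in D(Y,Z)$, with $M_{d_{XY}}(X,Y)=M_{d'_{XY}}(X,Y)$ and $M_{d_{YZ}}(Y,Z)=M_{d'_{YZ}}(Y,Z)$. Then $M_{d_{YZ}\circ d_{XY}}(X,Z)=M_{d'_{YZ}\circ d'_{XY}}(X,Z)$.
   Context: Bounded geometry: for every $R>0$ the number of points in balls of radius $R$ is finite and uniformly bounded. $D(X,Y)$ is the set of metrics on $X\sqcup Y$ restricting to $d_X,d_Y$. For $T:H_X=l^2(X)\to H_Y=l^2(Y)$ bounded, $T_{yx}=\langle T\delta_x,\delta_y\rangle$; $T$ has propagation less than $L$ w.r.t. $d$ if $T_{yx}=0$ whenever $d(x,y)\ge L$; $M_d(X,Y)$ is the norm closure of bounded finite-propagation operators. $(d_{YZ}\circ d_{XY})$ is the metric on $X\sqcup Z$ extending $d_X,d_Z$ with $(d_{YZ}\circ d_{XY})(x,z)=\inf_{y\in Y}(d_{XY}(x,y)+d_{YZ}(y,z))$. *)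

(* Defs.v *)
From Stdlib Require Import Reals List ClassicalDescription.
Open Scope R_scope.

Definition C := (R * R)%type.
Definition C0 : C := (0, 0).
Definition C1 : C := (1, 0).
Definition Cadd (a b : C) : C := (fst a + fst b, snd a + snd b).
Definition Copp (a : C) : C := (- fst a, - snd a).
Definition Cmul (a b : C) : C :=
  (fst a * fst b - snd a * snd b, fst a * snd b + snd a * fst b).
Definition Cnorm2 (a : C) : R := fst a ^ 2 + snd a ^ 2.

Definition vadd {X : Type} (u v : X -> C) : X -> C := fun x => Cadd (u x) (v x).
Definition vscale {X : Type} (a : C) (u : X -> C) : X -> C := fun x => Cmul a (u x).
Definition vsub {X : Type} (u v : X -> C) : X -> C := fun x => Cadd (u x) (Copp (v x)).

Definition sumsq {X : Type} (u : X -> C) (l : list X) : R :=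
  fold_right (fun x acc => Cnorm2 (u x) + acc) 0 l.

(** ||u|| <= |r| *)
Definition l2_bound {X : Type} (u : X -> C) (r : R) : Prop :=
  forall l : list X, NoDup l -> sumsq u l <= r ^ 2.

Definition in_l2 {X : Type} (u : X -> C) : Prop := exists r, l2_bound u r.

Definition delta {X : Type} (x : X) : X -> C :=
  fun x' => if excluded_middle_informative (x' = x) then C1 else C0.

(** an operator H_X -> H_Y; only its values on l^2 vectors matter *)
Definition op (X Y : Type) := (X -> C) -> (Y -> C).

Definition is_linear {X Y : Type} (T : op X Y) : Prop :=
  forall (u v : X -> C) (a : C), in_l2 u -> in_l2 v ->
    T (vadd (vscale a u) v) = vadd (vscale a (T u)) (T v).

Definition opnorm_le {X Y : Type} (T : op X Y) (c : R) : Prop :=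
  forall (u : X -> C) (r : R), l2_bound u r -> l2_bound (T u) (c * r).

Definition is_bounded_op {X Y : Type} (T : op X Y) : Prop :=
  is_linear T /\ exists c, opnorm_le T c.

Definition opsub {X Y : Type} (T S : op X Y) : op X Y :=
  fun u => vsub (T u) (S u).

Definition entry {X Y : Type} (T : op X Y) (x : X) (y : Y) : C := T (delta x) y.

Definition has_propagation_lt {X Y : Type} (d : X + Y -> X + Y -> R)
  (T : op X Y) (L : R) : Prop :=
  forall x y, L <= d (inl x) (inr y) -> entry T x y = C0.

Definition finite_propagation {X Y : Type} (d : X + Y -> X + Y -> R)
  (T : op X Y) : Prop := exists L, has_propagation_lt d T L.

(** membership in M_d(X,Y): norm closure of bounded finite-propagation operators *)
Definition in_M {X Y : Type} (d : X + Y -> X + Y -> R) (T : op X Y) : Prop :=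
  is_bounded_op T /\
  forall eps, 0 < eps ->
    exists S : op X Y, is_bounded_op S /\ finite_propagation d S /\
      opnorm_le (opsub T S) eps.

Definition is_metric {A : Type} (d : A -> A -> R) : Prop :=
  (forall a b, d a b = 0 <-> a = b) /\
  (forall a b, d a b = d b a) /\
  (forall a b c, d a c <= d a b + d b c).

Definition countable (A : Type) : Prop :=
  exists f : A -> nat, forall a b, f a = f b -> a = b.

Definition discrete_metric {A : Type} (d : A -> A -> R) : Prop :=
  forall a, exists eps, 0 < eps /\ forall b, d a b < eps -> b = a.

Definition bounded_geometry {A : Type} (d : A -> A -> R) : Prop :=
  forall Rad, 0 < Rad -> exists N : nat, forall a, exists l : list A,
    (length l <= N)%nat /\ forall b, d a b <= Rad -> In b l.

Definition cdbg_space {A : Type} (d : A -> A -> R) : Prop :=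
  is_metric d /\ countable A /\ discrete_metric d /\ bounded_geometry d.

Definition in_D {X Y : Type} (dX : X -> X -> R) (dY : Y -> Y -> R)
  (d : X + Y -> X + Y -> R) : Prop :=
  is_metric d /\
  (forall a b, d (inl a) (inl b) = dX a b) /\
  (forall a b, d (inr a) (inr b) = dY a b).

Definition is_inf (P : R -> Prop) (m : R) : Prop :=
  (forall r, P r -> m <= r) /\ (forall m', (forall r, P r -> m' <= r) -> m' <= m).

Definition is_comp {X Y Z : Type} (dX : X -> X -> R) (dZ : Z -> Z -> R)
  (dXY : X + Y -> X + Y -> R) (dYZ : Y + Z -> Y + Z -> R)
  (d : X + Z -> X + Z -> R) : Prop :=
  (forall a b, d (inl a) (inl b) = dX a b) /\
  (forall a b, d (inr a) (inr b) = dZ a b) /\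
  (forall x z,
     is_inf (fun r => exists y : Y, r = dXY (inl x) (inr y) + dYZ (inl y) (inr z))
            (d (inl x) (inr z)) /\
     d (inr z) (inl x) = d (inl x) (inr z)).

(* Main.v *)
Require Import Defs.
From Stdlib Require Import Reals.
From Stdlib Require Import Lra Lia List Classical FunctionalExtensionality.
From Stdlib Require Import ClassicalDescription.
From Stdlib Require ClassicalEpsilon.
Open Scope R_scope.

Lemma metric_nonneg {T : Type} (d : T -> T -> R) : is_metric d -> forall a b, 0 <= d a b.
Proof.
  intros [H0 [Hs Ht]] a b. pose proof (Ht a b a) as r.
  rewrite (proj2 (H0 a a) eq_refl), (Hs b a) in r. lra.
Qed.

Lemma sumsq_delta {X : Type} (x : X) (l : list X) : NoDup l ->
  sumsq (delta x) l <= 1 /\ (~ In x l -> sumsq (delta x) l = 0).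
Proof.
  induction l as [|a l IH]; intros Hl.
  - simpl. split; [lra|auto].
  - inversion Hl as [|? ? Ha Hl']; subst. destruct (IH Hl') as [IH1 IH2].
    change (sumsq (delta x) (a::l)) with (Cnorm2 (delta x a) + sumsq (delta x) l).
    destruct (excluded_middle_informative (a = x)) as [e|e].
    + subst. assert (E : delta x x = Defs.C1).
      { unfold delta. destruct (excluded_middle_informative (x = x)); congruence. }
      rewrite E, (IH2 Ha). replace (Cnorm2 Defs.C1) with 1 by (unfold Cnorm2, Defs.C1; simpl; ring). split; [lra|].
      intros H; exfalso; apply H; left; auto.
    + assert (E : delta x a = Defs.C0).
      { unfold delta. destruct (excluded_middle_informative (a = x)); congruence. }
      rewrite E. replace (Cnorm2 Defs.C0) with 0 by (unfold Cnorm2, Defs.C0; simpl; ring). split; [lra|].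
      intros H. assert (~ In x l) by (intro; apply H; right; auto). rewrite IH2 by auto. lra.
Qed.

Section Op.
Variables (A B : Type) (f : nat -> A * B).
Hypothesis hfst : forall n m, fst (f n) = fst (f m) -> n = m.
Hypothesis hsnd : forall n m, snd (f n) = snd (f m) -> n = m.

Definition idx (b : B) : option nat :=
  match excluded_middle_informative (exists n, snd (f n) = b) with
  | left H => Some (proj1_sig (ClassicalEpsilon.constructive_indefinite_description _ H))
  | right _ => None end.

Lemma idx_spec b n : idx b = Some n -> snd (f n) = b.
Proof.
  unfold idx. destruct (excluded_middle_informative _) as [e|e]; [|discriminate].
  destruct (ClassicalEpsilon.constructive_indefinite_description _ e) as [m Hm]; simpl.
  intros H; inversion H; subst; auto.
Qed.

Lemma idx_f n : idx (snd (f n)) = Some n.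
Proof.
  unfold idx. destruct (excluded_middle_informative _) as [e|e].
  - destruct (ClassicalEpsilon.constructive_indefinite_description _ e) as [m Hm]; simpl.
    f_equal; apply hsnd; auto.
  - exfalso; apply e; exists n; auto.
Qed.

Definition Top : op A B := fun u b =>
  match idx b with Some n => u (fst (f n)) | None => Defs.C0 end.

Lemma Top_linear : is_linear Top.
Proof.
  intros u v a _ _. apply functional_extensionality; intro b.
  unfold Top, vadd, vscale. destruct (idx b); auto.
  unfold Cadd, Cmul, Defs.C0; simpl; f_equal; ring.
Qed.

Lemma sumsq_Top u l : NoDup l -> exists l', NoDup l' /\ sumsq (Top u) l = sumsq u l' /\
  forall a, In a l' -> exists m, a = fst (f m) /\ In (snd (f m)) l.
Proof.
  induction l as [|b l IH]; intros Hl.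
  - exists nil; simpl; repeat split; auto. constructor. intros a [].
  - inversion Hl as [|? ? Hb Hl']; subst. destruct (IH Hl') as [l' [H1 [H2 H3]]].
    destruct (idx b) eqn:E.
    + exists (fst (f n) :: l'). split; [|split].
      * constructor; auto. intro H. destruct (H3 _ H) as [m [Hm Hm2]].
        apply hfst in Hm; subst. rewrite (idx_spec _ _ E) in Hm2. contradiction.
      * simpl. unfold Top at 1. rewrite E, H2. reflexivity.
      * intros a [Ha|Ha].
        -- exists n; split; auto. left. symmetry; apply idx_spec; auto.
        -- destruct (H3 _ Ha) as [m [Hm Hm2]]. exists m; split; auto. right; auto.
    + exists l'. split; [auto|split].
      * simpl. unfold Top at 1. rewrite E, H2. unfold Cnorm2, Defs.C0; simpl; ring.
      * intros a Ha. destruct (H3 _ Ha) as [m [Hm Hm2]]. exists m; split; auto. right; auto.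
Qed.

Lemma Top_bounded : opnorm_le Top 1.
Proof.
  intros u r Hu l Hl. destruct (sumsq_Top u l Hl) as [l' [H1 [H2 _]]].
  rewrite H2, Rmult_1_l. apply Hu; auto.
Qed.

End Op.

Lemma coarse {A B : Type} (dA : A -> A -> R) (dB : B -> B -> R) (d d' : A + B -> A + B -> R)
  (hd : in_D dA dB d) (hd' : in_D dA dB d')
  (hM : forall T, in_M d T -> in_M d' T) :
  forall L, exists L', forall a b, d (inl a) (inr b) < L -> d' (inl a) (inr b) < L'.
Proof.
  intros L. apply NNPP; intro Hn.
  assert (Hb : forall L', exists p : A * B,
    d (inl (fst p)) (inr (snd p)) < L /\ L' <= d' (inl (fst p)) (inr (snd p))).
  { intro L'. apply NNPP; intro H2. apply Hn. exists L'. intros a b Hab.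
    apply Rnot_le_lt. intro H3. apply H2. exists (a, b); simpl; auto. }
  set (g := fun L' => proj1_sig (ClassicalEpsilon.constructive_indefinite_description _ (Hb L'))).
  set (Dp := fun p : A * B => d' (inl (fst p)) (inr (snd p))).
  set (Ep := fun p : A * B => d (inl (fst p)) (inr (snd p))).
  assert (Hg : forall L', Ep (g L') < L /\ L' <= Dp (g L')).
  { intro L'. unfold g. destruct (ClassicalEpsilon.constructive_indefinite_description _ _); simpl; auto. }
  destruct hd as [Hm [HA HB]]. destruct hd' as [Hm' [HA' HB']].
  assert (hL : 0 < L).
  { destruct (Hg 0) as [H _]. pose proof (metric_nonneg d Hm (inl (fst (g 0))) (inr (snd (g 0)))).
    unfold Ep in H. lra. }
  set (G := 2 * L + 1).
  set (f := fun n => nat_rect (fun _ => (A * B)%type) (g 0) (fun _ p => g (Dp p + G)) n).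
  assert (Hstep : forall n, Dp (f n) + G <= Dp (f (S n))).
  { intro n. change (f (S n)) with (g (Dp (f n) + G)). apply Hg. }
  assert (HE : forall n, Ep (f n) < L).
  { intro n; destruct n; [apply Hg|]. change (f (S n)) with (g (Dp (f n) + G)). apply Hg. }
  assert (Hmono : forall m k, (k < m)%nat -> Dp (f k) + G <= Dp (f m)).
  { induction m; intros k Hk; [lia|].
    destruct (Nat.eq_dec k m); [subst; apply Hstep|].
    assert (k < m)%nat by lia. pose proof (IHm k H). pose proof (Hstep m). unfold G in *. lra. }
  assert (Hgrow : forall n, INR n <= Dp (f n)).
  { induction n. simpl. apply (metric_nonneg d' Hm'). rewrite S_INR.
    pose proof (Hstep n). unfold G in *. lra. }
  destruct Hm as [H0 [Hs Ht]]. destruct Hm' as [H0' [Hs' Ht']].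
  assert (Hinj : forall k m, (k < m)%nat -> fst (f k) <> fst (f m) /\ snd (f k) <> snd (f m)).
  { intros k m Hkm. pose proof (Hmono m k Hkm). pose proof (HE k). pose proof (HE m).
    unfold Dp, Ep, G in *. destruct (f k) as [ak bk]; destruct (f m) as [am bm]; simpl in *.
    split; intro Heq.
    - subst am. pose proof (Ht' (inl ak) (inr bk) (inr bm)). rewrite HB', <- HB in H3.
      pose proof (Ht (inr bk) (inl ak) (inr bm)). pose proof (Hs (inr bk) (inl ak)). pose proof (Hs (inr bk) (inr bm)). lra.
    - subst bm. pose proof (Ht' (inl am) (inl ak) (inr bk)). rewrite HA', <- HA in H3.
      pose proof (Ht (inl am) (inr bk) (inl ak)). pose proof (Hs (inr bk) (inl ak)). pose proof (Hs (inl am) (inl ak)). lra. }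
  assert (hfst : forall n m, fst (f n) = fst (f m) -> n = m).
  { intros n m H. destruct (Compare_dec.lt_eq_lt_dec n m) as [[h|h]|h]; auto.
    - exfalso; apply (proj1 (Hinj _ _ h)); auto.
    - exfalso; apply (proj1 (Hinj _ _ h)); auto. }
  assert (hsnd : forall n m, snd (f n) = snd (f m) -> n = m).
  { intros n m H. destruct (Compare_dec.lt_eq_lt_dec n m) as [[h|h]|h]; auto.
    - exfalso; apply (proj2 (Hinj _ _ h)); auto.
    - exfalso; apply (proj2 (Hinj _ _ h)); auto. }
  set (T := Top A B f).
  assert (HT : is_bounded_op T).
  { split. apply Top_linear. exists 1. apply Top_bounded; auto. }
  assert (HMT : in_M d T).
  { split; auto. intros eps Heps. exists T. split; auto. split.
    - exists L. intros a b Hab. unfold entry, T, Top.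
      destruct (idx A B f b) eqn:E; auto. unfold delta.
      destruct (excluded_middle_informative (fst (f n) = a)); auto.
      exfalso. apply idx_spec in E. pose proof (HE n). unfold Ep in H.
      rewrite E, e in H. lra.
    - intros u r Hu l Hl.
      assert (Hz : sumsq (opsub T T u) l = 0).
      { clear Hl. induction l; simpl; auto. rewrite IHl.
        unfold opsub, vsub, Cadd, Copp, Cnorm2; simpl; ring. }
      rewrite Hz. apply pow2_ge_0. }
  apply hM in HMT. destruct HMT as [_ Happ].
  destruct (Happ (1/2)) as [S [_ [[L'' HS] Hn2]]]; [lra|].
  destruct (INR_archimed 1 L'') as [n Hn3]; [lra|].
  pose proof (Hgrow n).
  destruct (sumsq_delta (fst (f n)) nil (NoDup_nil _)) as [_ _].
  assert (Hd : l2_bound (delta (fst (f n))) 1).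
  { intros l Hl. destruct (sumsq_delta (fst (f n)) l Hl). simpl; lra. }
  pose proof (Hn2 _ _ Hd (snd (f n) :: nil)) as Hc.
  assert (HN : NoDup (snd (f n) :: nil)). { constructor; [intros []|constructor]. }
  specialize (Hc HN). simpl in Hc.
  unfold opsub, vsub in Hc. unfold T, Top at 1 in Hc. rewrite (idx_f A B f hsnd n) in Hc.
  assert (HS0 : S (delta (fst (f n))) (snd (f n)) = Defs.C0).
  { apply HS. unfold Dp in H. lra. }
  rewrite HS0 in Hc. unfold delta in Hc.
  destruct (excluded_middle_informative (fst (f n) = fst (f n))) as [_|e]; [|apply e; auto].
  unfold Cnorm2, Cadd, Copp, Defs.C1, Defs.C0 in Hc; simpl in Hc. lra.
Qed.

Lemma transfer {X Y Z : Type} (dX : X -> X -> R) (dY : Y -> Y -> R) (dZ : Z -> Z -> R)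
  (dXY dXY' : X + Y -> X + Y -> R) (dYZ dYZ' : Y + Z -> Y + Z -> R)
  (nXY : is_metric dXY) (nYZ : is_metric dYZ)
  (cXY : forall L, exists L', forall a b, dXY (inl a) (inr b) < L -> dXY' (inl a) (inr b) < L')
  (cYZ : forall L, exists L', forall a b, dYZ (inl a) (inr b) < L -> dYZ' (inl a) (inr b) < L')
  (dXZ dXZ' : X + Z -> X + Z -> R)
  (hc : is_comp dX dZ dXY dYZ dXZ) (hc' : is_comp dX dZ dXY' dYZ' dXZ') :
  forall T : op X Z, in_M dXZ T -> in_M dXZ' T.
Proof.
  intros T [Hb Happ]. split; auto. intros eps He.
  destruct (Happ eps He) as [S [HSb [[L HL] HSn]]]. exists S; split; auto; split; auto.
  destruct (cXY L) as [L1 H1], (cYZ L) as [L2 H2]. exists (L1 + L2).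
  intros x z Hxz. apply HL. apply Rnot_lt_le; intro Hlt.
  destruct hc as [_ [_ Hinf]]. destruct (Hinf x z) as [[Hlow Hgl] _].
  assert (Hy : exists y, dXY (inl x) (inr y) + dYZ (inl y) (inr z) < L).
  { apply NNPP; intro Hno. assert (L <= dXZ (inl x) (inr z)); [|lra].
    apply Hgl. intros r [y Hr]. apply Rnot_lt_le; intro. apply Hno. exists y; lra. }
  destruct Hy as [y Hy].
  pose proof (metric_nonneg _ nXY (inl x) (inr y)).
  pose proof (metric_nonneg _ nYZ (inl y) (inr z)).
  assert (A1 := H1 x y ltac:(lra)). assert (A2 := H2 y z ltac:(lra)).
  destruct hc' as [_ [_ Hinf']]. destruct (Hinf' x z) as [[Hlow' _] _].
  pose proof (Hlow' _ (ex_intro _ y eq_refl)). lra.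
Qed.

Theorem mainTheorem8 (X Y Z : Type)
  (dX : X -> X -> R) (dY : Y -> Y -> R) (dZ : Z -> Z -> R)
  (hX : cdbg_space dX) (hY : cdbg_space dY) (hZ : cdbg_space dZ)
  (dXY dXY' : X + Y -> X + Y -> R) (dYZ dYZ' : Y + Z -> Y + Z -> R)
  (hXY : in_D dX dY dXY) (hXY' : in_D dX dY dXY')
  (hYZ : in_D dY dZ dYZ) (hYZ' : in_D dY dZ dYZ')
  (hMXY : forall T : op X Y, in_M dXY T <-> in_M dXY' T)
  (hMYZ : forall T : op Y Z, in_M dYZ T <-> in_M dYZ' T)
  (dXZ dXZ' : X + Z -> X + Z -> R)
  (hc : is_comp dX dZ dXY dYZ dXZ) (hc' : is_comp dX dZ dXY' dYZ' dXZ') :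
  forall T : op X Z, in_M dXZ T <-> in_M dXZ' T.
Proof.
  intros T. split.
  - apply (transfer dX dY dZ dXY dXY' dYZ dYZ' (proj1 hXY) (proj1 hYZ)
      (coarse _ _ _ _ hXY hXY' (fun T => proj1 (hMXY T)))
      (coarse _ _ _ _ hYZ hYZ' (fun T => proj1 (hMYZ T))) dXZ dXZ' hc hc').
  - apply (transfer dX dY dZ dXY' dXY dYZ' dYZ (proj1 hXY') (proj1 hYZ')
      (coarse _ _ _ _ hXY' hXY (fun T => proj2 (hMXY T)))
      (coarse _ _ _ _ hYZ' hYZ (fun T => proj2 (hMYZ T))) dXZ' dXZ hc' hc).
Qed.
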